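(* Consider the following setting and algorithm (the ''MPTPT-based routing algorithm''). Network: a directed graph $G_0=(V_0,E_0)$ with $V_0=V_{sw}\cup V_{pm}$, $V_{sw}\cap V_{pm}=\emptyset$ (switch nodes and physical-machine (PM) nodes). Each PM $u\in V_{pm}$ is connected to exactly one switch by two links (one in each direction), and no switch is connected to more than one PM; for a switch $v$ attached to a PM we write $\hat v$ for that PM, and $V_{sw\rightarrow pm}\subseteq V_{sw}$ is the set of such switches. All other edges join two switches. Each edge $e$ has capacity $g(e)\ge 0$ and each PM $u$ has processing capacity $b(u)\ge 0$. There are $M$ commodities $com_i=\langle s_i,t_i,d_i,c_i\rangle$, $i=1,\dots,M$, with source $s_i\in V_{sw}$, destination $t_i\in V_{sw}$, demand $d_i>0$ and class $c_i\in\{1,\dots,C\}$, where $C$ is the number of distinct classes; a class $k$ has a per-unit processing cost $p(k)>0$. Let $V_T$ be the set of distinct destinations $\{t_1,\dots,t_M\}$. Step 1. Build $G_1=(V_1,E_1)$: delete the PM nodes and their incident edges, add $C$ new nodes $\mathcal P_1,\dots,\mathcal P_C$ (set $V_{\mathcal P}$), and add an edge $(v,\mathcal P_k)$ for every $v\in V_{sw\rightarrow pm}$ and every $k$. For $t=\mathcal P_k$ and $v\in V_{sw}$ let $d_t(v)$ be the total demand of commodities of class $k$ with source $v$ ($d_t(v)=0$ for $v\in V_{\mathcal P}$). Compute a basic feasible solution $(f_t(e))_{t\in V_{\mathcal P},e\in E_1}$ of the LP: minimize $\sum_{e\in E_1,t\in V_{\mathcal P}} f_t(e)$ subject to (i)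 for all $t\in V_{\mathcal P}$ and $v\in V_1$, $v\ne t$: $\sum_{(v,w)\in E_1}f_t(v,w)-\sum_{(u,v)\in E_1}f_t(u,v)=d_t(v)$; (ii) for all $e\in E_1\cap E_0$: $\sum_t f_t(e)\le g(e)$; (iii) for all $v\in V_{sw\rightarrow pm}$: $\sum_t f_t(v,t)\le\min\{g(v,\hat v),g(\hat v,v)\}$; (iv) for all $v\in V_{sw\rightarrow pm}$: $\sum_{t=\mathcal P_k} p(k) f_t(v,t)\le b(\hat v)$; (v) $f_t(e)\ge 0$. Then apply Flow2Trees$(t)$ (defined below) to this solution for every $t\in V_{\mathcal P}$. Step 2. Build $G_2=(V_2,E_2)$ from $G_1$ by deleting $V_{\mathcal P}$ and incident edges (so $V_2=V_{sw}$, $E_2=E_1\cap E_0$), with residual capacities $\bar g(e)=g(e)-\sum_t f_t(e)$ from the Step 1 solution. Form commodities for Step 2 whose sources lie in $V_{sw\rightarrow pm}$ and whose destinations lie in $V_T$: for each Step 1 tree carrying class-$c$ traffic from source $s$ through switch $v\in V_{sw\rightarrow pm}$, that traffic is split among the destinations $t$ of class-$c$ commodities with source $s$ in proportion to their demands, and becomes demand from $v$ to $t$; let $d_t(v)$ be the resulting total demand from $v$ to $t\in V_T$. Compute a basic feasible solution of the LP: minimize $\sum_{e\in E_2,t\in V_T}f_t(e)$ subject to flow conservation $\sum_{(v,w)\in E_2}f_t(v,w)-\sum_{(u,v)\in E_2}f_t(u,v)=d_t(v)$ for all $t\in V_T$, $v\in V_2$, $v\neq t$; $\sum_{t\in V_T}f_t(e)\le\bar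 g(e)$ for all $e\in E_2$; $f_t(e)\ge 0$. Then apply Flow2Trees$(t)$ for every $t\in V_T$. Flow2Trees$(t)$, given a graph, a root $t$ and a flow $f_t$ to $t$: while some source $s$ still has positive residual demand to $t$, construct, using only edges $e$ with $f_t(e)>0$, a multipoint-to-point tree $R$ (a tree with all edges oriented toward the root $t$) spanning all sources with residual demand to $t$, move as much flow as possible onto $R$ (i.e. route amounts from the sources along their paths in $R$, subtracting them from the residual demands and from $f_t$ on the edges used, keeping everything nonnegative, and maximizing the amount moved), and output $R$. Assume both LPs are feasible. Then the total number of multipoint-to-point trees produced by the algorithm (over both steps) is at most $C+2|E_0|+|V_T|-2|V_{pm}|$.
   Context: A multipoint-to-point tree rooted at a node $t$ is a directed tree in which every edge is oriented toward $t$; it is used to carry traffic from several sources to the single destination $t$. A basic feasible solution of an LP is a vertex of its feasible polyhedron. $|A|$ denotes the cardinality of a set $A$. *)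

(* Defs.v *)
From HB Require Import structures.
From mathcomp Require Import all_boot all_order all_algebra.
Set Implicit Arguments. Unset Strict Implicit. Unset Printing Implicit Defensive.
Import Order.TTheory GRing.Theory Num.Theory.
Local Open Scope ring_scope.

(* Linear programming: a basic feasible solution is a vertex (extreme   *)
(* point) of the feasible polyhedron; the algorithm computes an optimal *)
(* one (a vertex minimizing the objective).                             *)
Section LP.
Variable R : realFieldType.

Definition extreme_point (X : Type) (P : (X -> R) -> Prop) (x : X -> R) : Prop :=
  P x /\
  forall (y z : X -> R) (l : R), P y -> P z -> 0 < l -> l < 1 ->
    (forall i, x i = l * y i + (1 - l) * z i) -> forall i, y i = z i.

Definition optimal_bfs (X : Type) (P : (X -> R) -> Prop) (obj : (X -> R) -> R)
  (x : X -> R) : Prop :=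
  extreme_point P x /\ forall y, P y -> obj x <= obj y.
End LP.

(* A multipoint-to-point tree is given by its vertex set S (containing  *)
(* t) and a parent map par (convention: par t = t); every v in S\{t}    *)
(* has its out-edge (v, par v) in E, with positive residual flow, and   *)
(* following par from v leads to t.  The path of a source s in the tree *)
(* is its par-orbit; amounts a s are routed along these paths.          *)
Section Flow2Trees.
Variables (R : realFieldType) (V : finType) (E : rel V) (t : V).

Record tree_step := TreeStep {
  tr_vert : {set V};
  tr_par  : V -> V;
  tr_amt  : V -> R }.

Definition is_mpt_tree (f : V -> V -> R) (S : {set V}) (par : V -> V) : Prop :=
  [/\ t \in S, par t = t &
      forall v, v \in S -> v != t ->
        [/\ par v \in S, E v (par v), 0 < f v (par v) & fconnect par v t]].

Definition tree_load (S : {set V}) (par : V -> V) (a : V -> R) (v : V) : R :=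
  \sum_(s in S | fconnect par s v) a s.

Definition feasible_amounts (D : V -> R) (f : V -> V -> R) (S : {set V})
  (par : V -> V) (a : V -> R) : Prop :=
  [/\ forall s, 0 <= a s,
      forall s, a s <= D s,
      forall s, s \notin S -> a s = 0 &
      forall v, v \in S -> v != t -> tree_load S par a v <= f v (par v)].

Definition residual_flow (f : V -> V -> R) (S : {set V}) (par : V -> V)
  (a : V -> R) : V -> V -> R :=
  fun x y => f x y -
    (if [&& x \in S, x != t & y == par x] then tree_load S par a x else 0).

Definition flow2trees_step (D : V -> R) (f : V -> V -> R) (st : tree_step) : Prop :=
  [/\ is_mpt_tree f (tr_vert st) (tr_par st),
      forall s, 0 < D s -> s \in tr_vert st,
      feasible_amounts D f (tr_vert st) (tr_par st) (tr_amt st) &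
      forall a', feasible_amounts D f (tr_vert st) (tr_par st) a' ->
        \sum_s a' s <= \sum_s tr_amt st s].

Fixpoint flow2trees_run (D : V -> R) (f : V -> V -> R) (r : seq tree_step)
  : Prop :=
  match r with
  | [::] => forall s, D s <= 0
  | st :: r' =>
      [/\ exists s, 0 < D s,
          flow2trees_step D f st &
          flow2trees_run (fun s => D s - tr_amt st s)
            (residual_flow f (tr_vert st) (tr_par st) (tr_amt st)) r']
  end.
End Flow2Trees.

Section Network.
Variables (R : realFieldType) (V0 : finType) (E0 : rel V0) (Vpm : {set V0}).
Variables (g : V0 -> V0 -> R) (b : V0 -> R).
Variables (M C : nat) (src dst : 'I_M -> V0) (dem : 'I_M -> R)
          (cls : 'I_M -> 'I_C) (p : 'I_C -> R).

Definition pm_structure : Prop :=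
  (forall u, u \in Vpm -> exists v,
     [/\ v \notin Vpm, E0 u v, E0 v u & forall w, E0 u w || E0 w u -> w = v]) /\
  (forall v u1 u2, v \notin Vpm -> u1 \in Vpm -> u2 \in Vpm ->
     E0 u1 v || E0 v u1 -> E0 u2 v || E0 v u2 -> u1 = u2).

Definition Vswpm : {set V0} :=
  [set v | (v \notin Vpm) && [exists u in Vpm, E0 u v]].

Definition VT : {set V0} := [set dst i | i : 'I_M].

Definition nb_edges : nat := #|[set e : V0 * V0 | E0 e.1 e.2]|.

(* Step 1: G1 has vertices V0 + 'I_C (inr k = P_k); PM nodes are kept  *)
(* only as isolated vertices (they carry no edge and no demand).        *)
Definition V1 := (V0 + 'I_C)%type.

Definition E1 : rel V1 := fun x y =>
  match x, y with
  | inl u, inl v => [&& E0 u v, u \notin Vpm & v \notin Vpm]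
  | inl u, inr _ => u \in Vswpm
  | _, _ => false
  end.

Definition d1 (k : 'I_C) (x : V1) : R :=
  match x with
  | inl v => \sum_(i | (src i == v) && (cls i == k)) dem i
  | inr _ => 0
  end.

(* variables f_t(e) of the LP, t = P_k, e = (x,y) *)
Definition X1 := ('I_C * V1 * V1)%type.

Definition lp1_feasible (f : X1 -> R) : Prop :=
  [/\ forall k x y, ~~ E1 x y -> f (k, x, y) = 0,
      forall k x y, 0 <= f (k, x, y),
      forall k v, v != inr k ->
        \sum_w f (k, v, w) - \sum_u f (k, u, v) = d1 k v,
      forall u v, E1 (inl u) (inl v) -> \sum_k f (k, inl u, inl v) <= g u v &
      (forall v u, v \in Vswpm -> u \in Vpm -> E0 u v ->
        \sum_k f (k, inl v, inr k) <= Num.min (g v u) (g u v)) /\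
      (forall v u, v \in Vswpm -> u \in Vpm -> E0 u v ->
        \sum_k p k * f (k, inl v, inr k) <= b u)].

Definition lp_obj (X : finType) (f : X -> R) : R := \sum_x f x.

Definition E2 : rel V0 := fun u v => [&& E0 u v, u \notin Vpm & v \notin Vpm].

Definition gbar (f1 : X1 -> R) (u v : V0) : R :=
  g u v - \sum_k f1 (k, inl u, inl v).

Definition ratio (s : V0) (k : 'I_C) (t : V0) : R :=
  (\sum_(i | [&& src i == s, cls i == k & dst i == t]) dem i) /
  (\sum_(i | (src i == s) && (cls i == k)) dem i).

(* demand from v to t in Step 2, obtained from the Step 1 trees: the    *)
(* amount routed from s through v into P_k (i.e. par v = P_k) is split  *)
(* among the destinations in proportion to the demands.                 *)
Definition d2 (r1 : 'I_C -> seq (tree_step R V1)) (t v : V0) : R :=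
  \sum_k \sum_(st <- r1 k)
     \sum_(s : V0 | fconnect (tr_par st) (inl s) (inl v)
                    && (tr_par st (inl v) == inr k))
        tr_amt st (inl s) * ratio s k t.

(* variables f_t(e), t in V_T, e = (x,y) *)
Definition X2 := (V0 * V0 * V0)%type.

Definition lp2_feasible (f1 : X1 -> R) (r1 : 'I_C -> seq (tree_step R V1))
  (f : X2 -> R) : Prop :=
  [/\ forall t x y, ~~ ((t \in VT) && E2 x y) -> f (t, x, y) = 0,
      forall t x y, 0 <= f (t, x, y),
      forall t v, t \in VT -> v != t ->
        \sum_w f (t, v, w) - \sum_u f (t, u, v) = d2 r1 t v &
      forall x y, E2 x y -> \sum_(t in VT) f (t, x, y) <= gbar f1 x y].

End Network.

(* Main.v *)
Require Import Defs.
From HB Require Import structures.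
From mathcomp Require Import all_boot all_order all_algebra.
From mathcomp Require Import lra zify.
Set Implicit Arguments. Unset Strict Implicit. Unset Printing Implicit Defensive.
Import Order.TTheory GRing.Theory Num.Theory.
Local Open Scope ring_scope.


Lemma kernel_exists (R : realFieldType) (X J : finType) (P : {set X}) (Js : {set J})
  (c : J -> X -> R) :
  (#|Js| < #|P|)%N ->
  exists y : X -> R, (exists i, y i != 0) /\ (forall i, i \notin P -> y i = 0) /\
    (forall j, j \in Js -> \sum_i c j i * y i = 0).
Proof.
move=> hlt.
have [x0 Px0] : exists x0, x0 \in P.
  by apply/set0Pn; rewrite -card_gt0; apply: leq_ltn_trans hlt.
pose A : 'M[R]_(#|P|, #|Js|) := \matrix_(a, b) c (enum_val b) (enum_val a).
have nrf : ~~ row_free A.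
  rewrite /row_free; apply/negP => /eqP e.
  by move: (rank_leq_col A); rewrite e leqNgt hlt.
have : kermx A != 0 by rewrite kermx_eq0.
case/matrix0Pn => a [b] Hab.
pose v := row a (kermx A).
have vA : v *m A = 0 by rewrite /v -row_mul mulmx_ker row0.
exists (fun x => if x \in P then v 0 (enum_rank_in Px0 x) else 0).
split; [|split].
- exists (enum_val b); rewrite enum_valP enum_valK_in /v mxE.
  by [].
- by move=> i Hi /=; rewrite (negbTE Hi).
- move=> j Hj.
  rewrite (bigID (fun i => i \in P)) /= [X in _ + X]big1 ?addr0; last first.
    by move=> i /negbTE ->; rewrite mulr0.
  rewrite (eq_bigr (fun i => c j i * v 0 (enum_rank_in Px0 i))); last by move=> i ->.
  have H0 : \sum_a v 0 a * A a (enum_rank_in Hj j) = 0.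
    have := congr1 (fun M : 'M[R]_(1, #|Js|) => M 0 (enum_rank_in Hj j)) vA.
    by rewrite [LHS]mxE [RHS]mxE.
  rewrite big_enum_val -{}[RHS]H0; apply: eq_bigr => i _.
  by rewrite enum_valK_in !mxE (enum_rankK_in Hj Hj) mulrC.
Qed.

Lemma bfs_support (R : realFieldType) (X J : finType) (Pf : (X -> R) -> Prop)
  (x : X -> R) (Js : {set J}) (c : J -> X -> R) :
  extreme_point Pf x -> (forall i, 0 <= x i) ->
  (forall (y : X -> R) (e : R), 0 < e -> (forall i, x i = 0 -> y i = 0) ->
     (forall j, j \in Js -> \sum_i c j i * y i = 0) ->
     (forall i, e * `|y i| <= x i) -> Pf (fun i => x i + e * y i)) ->
  (#|[set i | (0 < x i)%R]| <= #|Js|)%N.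
Proof.
move=> [_ Hext] hx HP.
rewrite leqNgt; apply/negP => hlt.
have [y [[i0 yi0] [ysupp yrow]]] := kernel_exists c hlt.
have ysup' : forall i, x i = 0 -> y i = 0.
  by move=> i h; apply: ysupp; rewrite inE h ltxx.
pose S := \sum_i `|y i| / x i.
have S0 : 0 <= S by apply: sumr_ge0 => i _; apply: divr_ge0.
pose e := (1 + S)^-1.
have e0 : 0 < e by rewrite invr_gt0; lra.
have he : forall i, e * `|y i| <= x i.
  move=> i; have [xi0|xin0] := eqVneq (x i) 0.
    by rewrite ysup' // normr0 mulr0 xi0.
  have xp : 0 < x i by rewrite lt_def xin0 hx.
  have : `|y i| / x i <= S.
    rewrite /S (bigD1 i) //= lerDl; apply: sumr_ge0 => k _; exact: divr_ge0.
  rewrite ler_pdivrMr // => h.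
  rewrite /e mulrC ler_pdivrMr; last lra.
  nra.
have P1 := HP y e e0 ysup' yrow he.
have P2 : Pf (fun i => x i + e * - y i).
  apply: HP => // [i /ysup' ->|j /yrow|i]; first by rewrite oppr0.
    by move=> h; rewrite (eq_bigr (fun i => - (c j i * y i))) ?sumrN ?h ?oppr0 // => i _; rewrite mulrN.
  by rewrite normrN.
have := Hext _ _ (1/2) P1 P2.
have h12 : (0 : R) < 1 / 2 by lra.
have h12' : (1 : R) / 2 < 1 by lra.
move=> /(_ h12 h12') H.
have := H (fun i => ltac:(lra)) i0.
move=> Hi.
have : e * y i0 = 0 by lra.
by move/eqP; rewrite mulf_eq0 (negbTE yi0) orbF => /eqP e00; move: e0; rewrite e00 ltxx.
Qed.


Lemma small_pos (R : realFieldType) (T : finType) (Q : pred T) (g : T -> R) (g0 : R) :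
  0 < g0 -> (forall w, Q w -> 0 < g w) ->
  exists d, [/\ 0 < d, d <= g0 & forall w, Q w -> d <= g w].
Proof.
move=> g00 gp.
pose S := \sum_(w | Q w) (g w)^-1.
have S0 : 0 <= S by apply: sumr_ge0 => w /gp h; rewrite invr_ge0 ltW.
have gi0 : 0 < g0^-1 by rewrite invr_gt0.
have pos1 : 0 < g0^-1 + S by lra.
exists (g0^-1 + S)^-1; split.
- by rewrite invr_gt0.
- rewrite -[X in _ <= X]invrK lef_pV2 ?posrE ?invr_gt0 //; lra.
- move=> w Qw; rewrite -[X in _ <= X]invrK lef_pV2 ?posrE ?invr_gt0 ?gp //.
  have : (g w)^-1 <= S.
    rewrite /S (bigD1 w) //= lerDl; apply: sumr_ge0 => u /andP[/gp h _].
    by rewrite invr_ge0 ltW.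
  lra.
Qed.

Section Run.
Variables (R : realFieldType) (V : finType) (E : rel V) (t : V).

Definition aliveS (f : V -> V -> R) : {set V} :=
  [set v | (v != t) && [exists w, 0 < f v w]].
Definition posS (f : V -> V -> R) : {set V * V} := [set e | 0 < f e.1 e.2].

Definition Inv (D : V -> R) (f : V -> V -> R) : Prop :=
  [/\ forall x y, 0 <= f x y, forall v, 0 <= D v, D t <= 0 &
      forall v, v != t -> D v <= \sum_w f v w - \sum_u f u v].

Lemma alive_le_pos f : (#|aliveS f| <= #|posS f|)%N.
Proof.
apply: leq_trans (leq_imset_card fst (posS f)).
apply: subset_leq_card; apply/subsetP => v; rewrite inE => /andP[_ /existsP[w hw]].
by apply/imsetP; exists (v, w); rewrite ?inE.
Qed.

Lemma alive_of_in D f u v : Inv D f -> v != t -> 0 < f u v -> v \in aliveS f.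
Proof.
move=> [f0 D0 _ Hc] vt huv; rewrite inE vt /=.
have [//|/existsPn hn] := boolP [exists w, 0 < f v w].
have h1 : \sum_w f v w <= 0.
  by apply: sumr_le0 => w _; rewrite leNgt hn.
have h2 : f u v <= \sum_u f u v.
  by rewrite (bigD1 u) //= lerDl; apply: sumr_ge0.
have := Hc v vt; have := D0 v; lra.
Qed.

Lemma alive_of_D D f v : Inv D f -> v != t -> 0 < D v -> v \in aliveS f.
Proof.
move=> [f0 D0 _ Hc] vt hD; rewrite inE vt /=.
have [//|/existsPn hn] := boolP [exists w, 0 < f v w].
have h1 : \sum_w f v w <= 0.
  by apply: sumr_le0 => w _; rewrite leNgt hn.
have h2 : 0 <= \sum_u f u v by apply: sumr_ge0.
have := Hc v vt; lra.
Qed.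

Lemma orbit_in (f : V -> V -> R) S par s n : is_mpt_tree E t f S par -> s \in S -> iter n par s \in S.
Proof.
move=> [tS pt Ht] sS; elim: n => [|n IH] //=.
have [->|nt] := eqVneq (iter n par s) t; first by rewrite pt.
by have [] := Ht _ IH nt.
Qed.

Lemma child_exists (f : V -> V -> R) S par s v : is_mpt_tree E t f S par -> s \in S -> s != v ->
  v != t -> fconnect par s v ->
  exists u, [/\ u \in S, u != t, par u = v & fconnect par s u].
Proof.
move=> Htr sS sv vt /iter_findex; set n := findex _ _ _ => hn.
case: n hn => [|m] /= hm; first by rewrite hm eqxx in sv.
have [tS pt _] := Htr.
exists (iter m par s); split => //.
- exact: (orbit_in m Htr sS).
- by apply: contra vt => /eqP e; rewrite -hm e pt.
- exact: fconnect_iter.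
Qed.

Lemma load_ge0 S par (a : V -> R) v : (forall s, 0 <= a s) -> 0 <= tree_load S par a v.
Proof. by move=> a0; apply: sumr_ge0. Qed.

Lemma load_split (f : V -> V -> R) S par (a : V -> R) v : is_mpt_tree E t f S par ->
  (forall s, 0 <= a s) -> v \in S -> v != t ->
  tree_load S par a v <=
  a v + \sum_(u | (u \in S) && (u != t) && (par u == v)) tree_load S par a u.
Proof.
move=> Htr a0 vS vt.
rewrite /tree_load (bigD1 v) /=; last by rewrite vS connect0.
rewrite lerD2l.
pose G s u := if fconnect par s u then a s else 0.
apply: (@le_trans _ _ (\sum_(s | (s \in S) && fconnect par s v && (s != v))
   \sum_(u | (u \in S) && (u != t) && (par u == v)) G s u)).
  apply: ler_sum => s /andP[/andP[sS fsv] sv].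
  have [u [uS ut pu fsu]] := child_exists Htr sS sv vt fsv.
  rewrite (bigD1 u) /=; last by rewrite uS ut pu eqxx.
  rewrite /G fsu lerDl; apply: sumr_ge0 => w _; case: ifP => // _.
rewrite exchange_big /=; apply: ler_sum => u _.
rewrite [X in _ <= X]big_mkcond [X in X <= _]big_mkcond /=; apply: ler_sum => s _.
rewrite /G; case: (s \in S) => //=; last first.
  by case: ifP => //; case: ifP.

Qed.


Lemma inv_step D f st : Inv D f -> flow2trees_step E t D f st ->
  Inv (fun s => D s - tr_amt st s)
      (residual_flow t f (tr_vert st) (tr_par st) (tr_amt st)).
Proof.
case: st => S par a; rewrite /flow2trees_step /feasible_amounts /=.
move=> [f0 D0 Dt Hc] [Htr span [a0 aD aS aL] amax] /=.
split.
- move=> x y; rewrite /residual_flow; case: ifP => [/and3P[xS xt /eqP ->]|_].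
    by rewrite subr_ge0; apply: aL.
  by rewrite subr0.
- by move=> v /=; rewrite subr_ge0.
- by rewrite /=; have := a0 t; lra.
- move=> v vt.
  have Hout : \sum_w residual_flow t f S par a v w =
      \sum_w f v w - (if v \in S then tree_load S par a v else 0).
    rewrite /residual_flow sumrB; congr (_ - _).
    case: (boolP (v \in S)) => vS.
      rewrite (bigD1 (par v)) //= vt eqxx /= big1 ?addr0 // => w /negbTE wn.
      by rewrite wn ?andbF.
    by apply: big1 => w _.
  have Hin : \sum_u residual_flow t f S par a u v = \sum_u f u v -
      \sum_(u | (u \in S) && (u != t) && (par u == v)) tree_load S par a u.
    rewrite /residual_flow sumrB [X in _ = _ - X]big_mkcond /=; congr (_ - _).
    by apply: eq_bigr => u _; rewrite (eq_sym v (par u)) andbA.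
  rewrite Hout Hin.
  have Hls : (if v \in S then tree_load S par a v else 0) <=
      a v + \sum_(u | (u \in S) && (u != t) && (par u == v)) tree_load S par a u.
    case: ifP => vS; first exact: (load_split Htr).
    apply: addr_ge0 => //; apply: sumr_ge0 => u _; exact: load_ge0.
  have := Hc v vt; lra.
Qed.

Lemma load_bump (S : {set V}) (par : V -> V) (a : V -> R) s (d : R) w : s \in S ->
  tree_load S par (fun x => if x == s then a x + d else a x) w =
  tree_load S par a w + (if fconnect par s w then d else 0).
Proof.
move=> sS; rewrite /tree_load.
case: (boolP (fconnect par s w)) => fw.
  rewrite (bigD1 s) /=; last by rewrite sS fw.
  rewrite [in RHS](bigD1 s) /=; last by rewrite sS fw.
  rewrite eqxx.
  have -> : \sum_(i | (i \in S) && fconnect par i w && (i != s))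
      (if i == s then a i + d else a i) =
      \sum_(i | (i \in S) && fconnect par i w && (i != s)) a i.
    by apply: eq_bigr => x /andP[_ /negbTE ->].
  lra.
rewrite addr0; apply: eq_bigr => x /andP[_ fx].
by case: eqP => // exs; rewrite -exs fx in fw.
Qed.

Lemma max_sat (D : V -> R) (f : V -> V -> R) st s : flow2trees_step E t D f st -> tr_amt st s < D s ->
  exists w, [/\ w \in tr_vert st, w != t, fconnect (tr_par st) s w &
     f w (tr_par st w) <= tree_load (tr_vert st) (tr_par st) (tr_amt st) w].
Proof.
case: st => S par a; rewrite /flow2trees_step /feasible_amounts /=.
move=> [Htr span [a0 aD aS aL] amax] hs /=.
have sS : s \in S by apply: span; have := a0 s; lra.
case: (boolP [exists w, [&& w \in S, w != t, fconnect par s w &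
     f w (par w) <= tree_load S par a w]]) => [/existsP[w /and4P[h1 h2 h3 h4]]|/existsPn hn].
  by exists w.
exfalso.
have g0p : 0 < D s - a s by rewrite subr_gt0.
have gp : forall w, [&& w \in S, w != t & fconnect par s w] ->
    0 < f w (par w) - tree_load S par a w.
  move=> w /and3P[wS wt fw]; have := hn w; rewrite wS wt fw /= -ltNge => h.
  by rewrite subr_gt0.
have [d [d0 dD dg]] := small_pos g0p gp.
pose a' x := if x == s then a x + d else a x.
have Hfeas : feasible_amounts t D f S par a'.
  split.
  - by move=> x; rewrite /a'; case: eqP => _; have := a0 x; lra.
  - move=> x; rewrite /a'; case: eqP => [->|_]; last exact: aD.
    lra.
  - move=> x xS; rewrite /a'; case: eqP => [exs|_]; last exact: aS.
    by rewrite exs sS in xS.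
  - move=> w wS wt; rewrite /a' load_bump //.
    case: ifP => fw; last by rewrite addr0; apply: aL.
    have := dg w; rewrite wS wt fw /= => /(_ isT); lra.
have := amax a' Hfeas.
rewrite (bigD1 s) // [X in _ <= X](bigD1 s) //= /a' eqxx.
have -> : \sum_(i | i != s) (if i == s then a i + d else a i) = \sum_(i | i != s) a i.
  by apply: eq_bigr => x /negbTE ->.
lra.
Qed.

Lemma path_lemma D' (f f' : V -> V -> R) S par w : is_mpt_tree E t f S par -> Inv D' f' ->
  w != t -> ~~ (0 < f' w (par w)) -> forall n u, u \in S -> u \in aliveS f' ->
  iter n par u = w ->
  exists u', [/\ u' \in S, u' != t, u' \in aliveS f' & ~~ (0 < f' u' (par u'))].
Proof.
move=> Htr Hinv wt hw n; elim: n => [|n IH] u uS ua.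
  by move=> /= e; exists u; split => //; rewrite e.
move=> hit.
have ut : u != t by move: ua; rewrite inE => /andP[].
case: (boolP (0 < f' u (par u))) => hp; last by exists u.
have [tS pt Ht] := Htr.
have [puS _ _ _] := Ht u uS ut.
have put : par u != t.
  apply: contra wt => /eqP e; rewrite -hit iterSr e iter_fix //.
apply: (IH (par u)) => //.
- exact: (alive_of_in Hinv put hp).
- by rewrite -iterSr.
Qed.

Lemma run_bound D f r : Inv D f -> flow2trees_run E t D f r ->
  (size r + #|aliveS f| <= #|posS f| + 1)%N.
Proof.
elim: r D f => [|st r IH] D f Hinv /=.
  by move=> _; rewrite add0n; apply: leq_trans (alive_le_pos f) _; apply: leq_addr.
move=> [_ Hst Hrun].
have Hinv' := inv_step Hinv Hst.
have := IH _ _ Hinv' Hrun.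
move: Hst Hinv' Hrun; case: st => S par a /= Hst Hinv' Hrun.
move: (Hst); rewrite /flow2trees_step /feasible_amounts /= => Hst'.
set f' := residual_flow t f S par a.
set D' := fun s => D s - a s.
move=> IHb.
have [f0 D0 Dt Hc] := Hinv.
have [Htr span [a0 aD aS aL] amax] := Hst'.
have f'le : forall x y, f' x y <= f x y.
  move=> x y; rewrite /f' /residual_flow; case: ifP => _; last by rewrite subr0.
  by rewrite lerBlDr lerDl load_ge0.
have posle : posS f' \subset posS f.
  by apply/subsetP => e; rewrite !inE => h; apply: lt_le_trans h (f'le _ _).
have alle : aliveS f' \subset aliveS f.
  apply/subsetP => v; rewrite !inE => /andP[-> /existsP[w h]] /=.
  by apply/existsP; exists w; apply: lt_le_trans h (f'le _ _).
have cpos : #|posS f| = (#|posS f'| + #|posS f :\: posS f'|)%N.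
  by rewrite cardsD (setIidPr posle) subnKC // subset_leq_card.
have calive : #|aliveS f| = (#|aliveS f'| + #|aliveS f :\: aliveS f'|)%N.
  by rewrite cardsD (setIidPr alle) subnKC // subset_leq_card.
case: r IH Hrun IHb => [|st' r'] IH Hrun IHb.
  by have := alive_le_pos f; rewrite /=; lia.
have [s Ds] : exists s, 0 < D' s by case: Hrun.
have st : s != t by apply: contraTneq Ds => ->; have [_ _ h _] := Hinv'; rewrite leNgt in h.
have hs : a s < D s by rewrite /D' subr_gt0 in Ds.
have [w [wS wt fsw hsat]] := max_sat Hst hs.
have hw : ~~ (0 < f' w (par w)).
  by rewrite /f' /residual_flow wS wt eqxx /= -leNgt subr_le0.
have sS : s \in S by apply: span; have := a0 s; lra.
have sa : s \in aliveS f' := alive_of_D Hinv' st Ds.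
have [u' [u'S u't u'a u'z]] := path_lemma Htr Hinv' wt hw sS sa (iter_findex fsw).
pose h (v : V) := (v, par v).
have hinj : injective h by move=> x y [].
have sub : h @: (u' |: (aliveS f :\: aliveS f')) \subset posS f :\: posS f'.
  apply/subsetP => e /imsetP[v hv ->]; rewrite !inE /=.
  move: hv; rewrite !inE => /orP[/eqP ->|/andP[vna va]].
    by rewrite u'z /=; have [_ _ Ht] := Htr; have [] := Ht u' u'S u't.
  have vt : v != t by move: va => /andP[].
  have vS : v \in S.
    apply: contraNT vna => vnS; rewrite vt /=.
    move: va => /andP[_ /existsP[w0 hw0]]; apply/existsP; exists w0.
    by rewrite /f' /residual_flow (negbTE vnS) /= subr0.
  have [_ _ Ht] := Htr; have [_ _ -> _] := Ht v vS vt; rewrite andbT.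
  apply/negP => hp; move/negP: vna; apply; rewrite vt /=; apply/existsP; by exists (par v).
have := subset_leq_card sub; rewrite card_imset // cardsU1.
have -> : u' \notin aliveS f :\: aliveS f' by rewrite in_setD u'a.
rewrite /= => hk.
rewrite /= cpos calive; move: IHb hk; rewrite /=.
move: (size r') #|aliveS f'| #|aliveS f :\: aliveS f'| #|posS f'| #|posS f :\: posS f'|.
move=> n1 n2 n3 n4 n5 H1 H2; clear -H1 H2; lia.
Qed.

End Run.


Lemma pert_nonneg (R : realFieldType) (x y e : R) : 0 < e -> e * `|y| <= x -> 0 <= x + e * y.
Proof.
move=> e0 h; have h1 := ler_norm (- y); rewrite normrN in h1.
have : e * - y <= e * `|y| by rewrite ler_pM2l.
lra.
Qed.

Lemma card_sum (T : finType) (P : pred T) : #|[set x | P x]| = (\sum_x (P x : nat))%N.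
Proof.
rewrite -sum1_card big_mkcond /=; apply: eq_bigr => x _; rewrite inE; by case: (P x).
Qed.

Lemma sum_pair (Rt : Type) (idx : Rt) (op : Monoid.com_law idx) (A B : finType)
  (F : A * B -> Rt) :
  \big[op/idx]_(p : A * B) F p = \big[op/idx]_a \big[op/idx]_b F (a, b).
Proof. by rewrite pair_big /=; apply: eq_bigr => -[a b]. Qed.

Lemma sum3 (R : realFieldType) (A B C3 : finType) (F : (A * B) * C3 -> R) :
  \sum_i F i = \sum_a \sum_b \sum_c F ((a, b), c).
Proof. by rewrite sum_pair sum_pair. Qed.

Lemma sum_delta (R : realFieldType) (A : finType) (a0 : A) (G : A -> R) :
  \sum_a (a == a0)%:R * G a = G a0.
Proof.
rewrite (bigD1 a0) //= eqxx mul1r big1 ?addr0 // => a /negbTE ->; by rewrite mul0r.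
Qed.

Lemma coefL1 (R : realFieldType) (A B C3 : finType) (ab : A * B) (Y : (A * B) * C3 -> R) :
  \sum_i (i.1 == ab)%:R * Y i = \sum_c Y (ab, c).
Proof.
rewrite sum_pair (eq_bigr (fun p => (p == ab)%:R * \sum_c Y (p, c))).
  by rewrite sum_delta.
by move=> p _; rewrite mulr_sumr.
Qed.

Lemma coefL2 (R : realFieldType) (A B C3 : finType) (a0 : A) (c0 : C3)
  (Y : (A * B) * C3 -> R) :
  \sum_i ((i.1.1 == a0) && (i.2 == c0))%:R * Y i = \sum_b Y ((a0, b), c0).
Proof.
rewrite sum3 (bigD1 a0) //= [X in _ + X]big1 ?addr0; last first.
  move=> a /negbTE an; apply: big1 => b _; apply: big1 => c _; by rewrite an mul0r.
apply: eq_bigr => b _; rewrite (bigD1 c0) //= !eqxx mul1r [X in _ + X]big1 ?addr0 //.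
by move=> c /negbTE ->; rewrite andbF mul0r.
Qed.

Lemma coefL4 (R : realFieldType) (A B C3 : finType) (b0 : B) (g : A -> C3) (h : A -> R)
  (Y : (A * B) * C3 -> R) :
  \sum_i ((i.1.2 == b0) && (i.2 == g i.1.1))%:R * h i.1.1 * Y i =
  \sum_a h a * Y ((a, b0), g a).
Proof.
rewrite sum3; apply: eq_bigr => a _.
rewrite (bigD1 b0) //= [X in _ + X]big1 ?addr0; last first.
  move=> b /negbTE bn; apply: big1 => c _; by rewrite bn mul0r mul0r.
rewrite (bigD1 (g a)) //= !eqxx mul1r [X in _ + X]big1 ?addr0 //.
by move=> c /negbTE ->; rewrite andbF mul0r mul0r.
Qed.

Lemma card_sumS (T : finType) (A : {set T}) : #|A| = (\sum_x (x \in A : nat))%N.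
Proof. by rewrite -sum1_card big_mkcond /=; apply: eq_bigr => x _; case: (x \in A). Qed.

Lemma zero_of_nonpos (R : realFieldType) (x : R) : 0 <= x -> ~~ (0 < x) -> x = 0.
Proof. by move=> h1 h2; apply/eqP; rewrite eq_le h1 andbT leNgt. Qed.


Lemma step1_count (R : realFieldType) (V0 : finType) (E0 : rel V0)
  (Vpm : {set V0}) (g : V0 -> V0 -> R) (b : V0 -> R)
  (M C : nat) (src : 'I_M -> V0) (dem : 'I_M -> R)
  (cls : 'I_M -> 'I_C) (p : 'I_C -> R)
  (Hdem : forall i, 0 < dem i)
  (f1 : X1 V0 C -> R)
  (Hf1 : extreme_point (lp1_feasible E0 Vpm g b src dem cls p) f1)
  (r1 : 'I_C -> seq (tree_step R (V1 V0 C)))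
  (Hr1 : forall k, flow2trees_run (@E1 V0 E0 Vpm C) (inr k) (d1 src dem cls k)
                     (fun x y => f1 (k, x, y)) (r1 k)) :
  (\sum_(k < C) size (r1 k) <=
     C + #|[set e : V0 * V0 | E2 E0 Vpm e.1 e.2]| + 2 * #|Vswpm E0 Vpm|)%N.
Proof.
have [[Hz Hnn Hcons Hcap [Hiii Hiv]] _] := Hf1.
pose f1k (k : 'I_C) := fun x y => f1 (k, x, y).
have Hd1 : forall k v, 0 <= d1 src dem cls k v.
  by move=> k [v|v] //=; apply: sumr_ge0 => i _; apply: ltW.
have Hinv : forall k, Inv (inr k : V1 V0 C) (d1 src dem cls k) (f1k k).
  move=> k; split => //.
  - by move=> x y; apply: Hnn.
  - by move=> v vt; rewrite /f1k (Hcons k v vt).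
have Hrun : forall k, (size (r1 k) + #|aliveS (inr k : V1 V0 C) (f1k k)| <=
                       #|posS (f1k k)| + 1)%N.
  by move=> k; apply: run_bound (Hinv k) (Hr1 k).
pose J1 := (('I_C * V1 V0 C) + ((V0 * V0) + (bool * V0)))%type.
pose Js1 := [set j : J1 | match j with
   | inl kv => kv.2 \in aliveS (inr kv.1 : V1 V0 C) (f1k kv.1)
   | inr (inl uv) => E2 E0 Vpm uv.1 uv.2
   | inr (inr bv) => bv.2 \in Vswpm E0 Vpm end].
pose c1 (j : J1) (i : X1 V0 C) : R := match j with
   | inl kv => (i.1 == kv)%:R - ((i.1.1 == kv.1) && (i.2 == kv.2))%:R
   | inr (inl uv) => ((i.1.2 == (inl uv.1 : V1 V0 C)) &&
        (i.2 == (fun _ => (inl uv.2 : V1 V0 C)) i.1.1))%:R * (fun _ => 1) i.1.1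
   | inr (inr bv) => ((i.1.2 == (inl bv.2 : V1 V0 C)) && (i.2 == inr i.1.1))%:R *
        (if bv.1 then p i.1.1 else 1) end.
have HLP : (#|[set i | (0 < f1 i)%R]| <= #|Js1|)%N.
  apply: (bfs_support (c := c1) Hf1) => [[[k x] z]|y e e0 ysup yrow ye]; first exact: Hnn.
  have Rcons : forall k v, v \in aliveS (inr k : V1 V0 C) (f1k k) ->
      \sum_w y ((k, v), w) - \sum_u y ((k, u), v) = 0.
    move=> k v hv.
    rewrite -(coefL1 (k, v) y) -(coefL2 k v y) -sumrB.
    under eq_bigr do rewrite -mulrBl.
    by apply: (yrow (inl (k, v))); rewrite inE.
  have Rcap : forall u v, E2 E0 Vpm u v -> \sum_k y ((k, inl u), inl v) = 0.
    move=> u v huv.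
    transitivity (\sum_a (fun _ => (1:R)) a * y ((a, inl u), (fun _ => (inl v : V1 V0 C)) a)).
      by apply: eq_bigr => k _; rewrite mul1r.
    rewrite -(coefL4 (inl u) (fun _ => (inl v : V1 V0 C)) (fun _ => (1:R)) y).
    by apply: (yrow (inr (inl (u, v)))); rewrite inE.
  have Rsw : forall (bb : bool) v, v \in Vswpm E0 Vpm ->
      \sum_k (if bb then p k else 1) * y ((k, inl v), inr k) = 0.
    move=> bb v hv.
    rewrite -(coefL4 (inl v) inr (fun k => if bb then p k else 1) y).
    by apply: (yrow (inr (inr (bb, v)))); rewrite inE.
  split.
  - move=> k x z hE; rewrite (Hz k x z hE) (ysup _ (Hz k x z hE)) mulr0 addr0 //.
  - by move=> k x z; apply: pert_nonneg e0 (ye _).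
  - move=> k v vt; rewrite !big_split /= -!mulr_sumr.
    have Y0 : \sum_w y ((k, v), w) = \sum_u y ((k, u), v).
      apply/eqP; rewrite -subr_eq0; apply/eqP.
      case: (boolP (v \in aliveS (inr k : V1 V0 C) (f1k k))) => hv; first exact: Rcons.
      move: hv; rewrite inE vt /= => /existsPn hn.
      have out0 : forall w, f1 ((k, v), w) = 0.
        by move=> w; apply: zero_of_nonpos (Hnn _ _ _) (hn w).
      have in0 : \sum_u f1 ((k, u), v) = 0.
        have := Hcons k v vt; rewrite big1 // sub0r => h.
        apply/eqP; rewrite eq_le sumr_ge0 // andbT.
        have := Hd1 k v; rewrite -h; lra.
      rewrite !big1 ?subr0 // => [u _|w _]; apply: ysup; last exact: out0.
      exact: (psumr_eq0P (fun u _ => Hnn k u v) in0).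
    rewrite Y0; have := Hcons k v vt; lra.
  - move=> u v huv; rewrite big_split /= -mulr_sumr (Rcap u v huv) mulr0 addr0.
    exact: Hcap.
  - split.
    + move=> v u hv hu huv; rewrite big_split /= -mulr_sumr.
      have Hs : \sum_k y ((k, inl v), inr k) = 0.
        rewrite -[RHS](Rsw false v hv); apply: eq_bigr => k _; by rewrite mul1r.
      by rewrite Hs mulr0 addr0; apply: Hiii.
    + move=> v u hv hu huv.
      under eq_bigr do rewrite mulrDr mulrCA.
      rewrite big_split /= -mulr_sumr.
      have := Rsw true v hv => /= ->; rewrite mulr0 addr0; exact: Hiv.
have Hpos : #|[set i | (0 < f1 i)%R]| = (\sum_k #|posS (f1k k)|)%N.
  rewrite card_sumS sum_pair sum_pair; apply: eq_bigr => k _.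
  rewrite card_sumS sum_pair; apply: eq_bigr => x _; apply: eq_bigr => z _.
  by rewrite !inE.
have HA : (\sum_kv ((inl kv : J1) \in Js1 : nat) =
           \sum_k #|aliveS (inr k : V1 V0 C) (f1k k)|)%N.
  rewrite sum_pair; apply: eq_bigr => k _; rewrite card_sumS.
  by apply: eq_bigr => v _; rewrite inE.
have HB : (\sum_uv ((inr (inl uv) : J1) \in Js1 : nat) =
           #|[set e : V0 * V0 | E2 E0 Vpm e.1 e.2]|)%N.
  by rewrite card_sumS; apply: eq_bigr => uv _; rewrite !inE.
have HC : (\sum_bv ((inr (inr bv) : J1) \in Js1 : nat) = 2 * #|Vswpm E0 Vpm|)%N.
  rewrite sum_pair big_bool /= card_sumS.
  have -> : (\sum_v ((inr (inr (true, v)) : J1) \in Js1 : nat) =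
             \sum_v (v \in Vswpm E0 Vpm : nat))%N.
    by apply: eq_bigr => v _; rewrite inE.
  have -> : (\sum_v ((inr (inr (false, v)) : J1) \in Js1 : nat) =
             \sum_v (v \in Vswpm E0 Vpm : nat))%N.
    by apply: eq_bigr => v _; rewrite inE.
  lia.
have HJs : #|Js1| = (\sum_k #|aliveS (inr k : V1 V0 C) (f1k k)| +
     #|[set e : V0 * V0 | E2 E0 Vpm e.1 e.2]| + 2 * #|Vswpm E0 Vpm|)%N.
  rewrite card_sumS big_sumType big_sumType /= HA HB HC; by rewrite addnA.
have Hsum : (\sum_(k < C) (size (r1 k) + #|aliveS (inr k : V1 V0 C) (f1k k)|) <=
    \sum_(k < C) (#|posS (f1k k)| + 1))%N.
  by apply: leq_sum => k _; exact: Hrun k.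
rewrite !big_split /= sum_nat_const card_ord muln1 in Hsum.
move: Hsum HLP; rewrite Hpos HJs.
move: (\sum_k size (r1 k))%N (\sum_k #|aliveS (inr k : V1 V0 C) (f1k k)|)%N
  (\sum_k #|posS (f1k k)|)%N #|[set e : V0 * V0 | E2 E0 Vpm e.1 e.2]| #|Vswpm E0 Vpm|.
move=> n1 n2 n3 n4 n5 H1 H2; clear -H1 H2; lia.
Qed.

Lemma run_amt_sum (R : realFieldType) (V : finType) (E : rel V) (t : V) D f r
  (G : tree_step R V -> R) :
  flow2trees_run E t D f r ->
  (forall st, (forall s, 0 <= tr_amt st s) -> 0 <= G st) -> 0 <= \sum_(st <- r) G st.
Proof.
elim: r D f => [|st r IH] D f /=; first by rewrite big_nil.
move=> [_ [_ _ [a0 _ _ _] _] Hrun] HG.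
rewrite big_cons; apply: addr_ge0; first exact: HG.
exact: IH Hrun HG.
Qed.

Lemma step2_count (R : realFieldType) (V0 : finType) (E0 : rel V0)
  (Vpm : {set V0}) (g : V0 -> V0 -> R)
  (M C : nat) (src dst : 'I_M -> V0) (dem : 'I_M -> R)
  (cls : 'I_M -> 'I_C)
  (Hdem : forall i, 0 < dem i)
  (f1 : X1 V0 C -> R)
  (r1 : 'I_C -> seq (tree_step R (V1 V0 C)))
  (Hr1 : forall k, flow2trees_run (@E1 V0 E0 Vpm C) (inr k) (d1 src dem cls k)
                     (fun x y => f1 (k, x, y)) (r1 k))
  (f2 : X2 V0 -> R)
  (Hf2 : extreme_point (lp2_feasible E0 Vpm g src dst dem cls f1 r1) f2)
  (r2 : V0 -> seq (tree_step R V0))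
  (Hr2 : forall t, t \in VT dst ->
           flow2trees_run (E2 E0 Vpm) t
             (fun v => if v == t then 0 else d2 src dst dem cls r1 t v)
             (fun x y => f2 (t, x, y)) (r2 t)) :
  (\sum_(t in VT dst) size (r2 t) <=
     #|VT dst| + #|[set e : V0 * V0 | E2 E0 Vpm e.1 e.2]|)%N.
Proof.
have [[Hz Hnn Hcons Hcap] _] := Hf2.
pose f2t (t : V0) := fun x y => f2 (t, x, y).
have Hd2 : forall t v, 0 <= d2 src dst dem cls r1 t v.
  move=> t v; rewrite /d2.
  rewrite /d2; apply: sumr_ge0 => k _; apply: (run_amt_sum (Hr1 k)) => st a0.
  apply: sumr_ge0 => s _; apply: mulr_ge0 => //.
  by apply: divr_ge0; apply: sumr_ge0 => i _; apply: ltW.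
have Hinv : forall t, t \in VT dst ->
    Inv t (fun v => if v == t then 0 else d2 src dst dem cls r1 t v) (f2t t).
  move=> t tV; split => //.
  - by move=> x y; apply: Hnn.
  - by move=> v; case: ifP.
  - by rewrite eqxx.
  - by move=> v vt; rewrite (negbTE vt) /f2t (Hcons t v tV vt).
have Hrun : forall t, t \in VT dst -> (size (r2 t) + #|aliveS t (f2t t)| <=
                       #|posS (f2t t)| + 1)%N.
  by move=> t tV; apply: run_bound (Hinv t tV) (Hr2 t tV).
pose J2 := ((V0 * V0) + (V0 * V0))%type.
pose Js2 := [set j : J2 | match j with
   | inl tv => (tv.1 \in VT dst) && (tv.2 \in aliveS tv.1 (f2t tv.1))
   | inr uv => E2 E0 Vpm uv.1 uv.2 end].
pose c2 (j : J2) (i : X2 V0) : R := match j with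
   | inl tv => (i.1 == tv)%:R - ((i.1.1 == tv.1) && (i.2 == tv.2))%:R
   | inr uv => ((i.1.2 == uv.1) && (i.2 == (fun _ => uv.2) i.1.1))%:R *
               (fun a => ((a \in VT dst) : nat)%:R) i.1.1 end.
have HLP : (#|[set i | (0 < f2 i)%R]| <= #|Js2|)%N.
  apply: (bfs_support (c := c2) Hf2) => [[[t x] z]|y e e0 ysup yrow ye]; first exact: Hnn.
  have Rcons : forall t v, t \in VT dst -> v \in aliveS t (f2t t) ->
      \sum_w y ((t, v), w) - \sum_u y ((t, u), v) = 0.
    move=> t v tV hv.
    rewrite -(coefL1 (t, v) y) -(coefL2 t v y) -sumrB.
    under eq_bigr do rewrite -mulrBl.
    by apply: (yrow (inl (t, v))); rewrite inE /= tV.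
  have Rcap : forall u v, E2 E0 Vpm u v -> \sum_(t in VT dst) y ((t, u), v) = 0.
    move=> u v huv.
    transitivity (\sum_a (fun a => ((a \in VT dst) : nat)%:R) a * y ((a, u), (fun _ => v) a)).
      rewrite big_mkcond; apply: eq_bigr => a _ /=.
      by case: (a \in VT dst); rewrite ?mul1r ?mul0r.
    rewrite -(coefL4 u (fun _ => v) (fun a => ((a \in VT dst) : nat)%:R) y).
    by apply: (yrow (inr (u, v))); rewrite inE.
  split.
  - move=> t x z hE; rewrite (Hz t x z hE) (ysup _ (Hz t x z hE)) mulr0 addr0 //.
  - by move=> t x z; apply: pert_nonneg e0 (ye _).
  - move=> t v tV vt; rewrite !big_split /= -!mulr_sumr.
    have Y0 : \sum_w y ((t, v), w) = \sum_u y ((t, u), v).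
      apply/eqP; rewrite -subr_eq0; apply/eqP.
      case: (boolP (v \in aliveS t (f2t t))) => hv; first exact: Rcons.
      move: hv; rewrite inE vt /= => /existsPn hn.
      have out0 : forall w, f2 ((t, v), w) = 0.
        by move=> w; apply: zero_of_nonpos (Hnn _ _ _) (hn w).
      have in0 : \sum_u f2 ((t, u), v) = 0.
        have := Hcons t v tV vt; rewrite big1 // sub0r => h.
        apply/eqP; rewrite eq_le sumr_ge0 // andbT.
        have := Hd2 t v; rewrite -h; lra.
      rewrite !big1 ?subr0 // => [u _|w _]; apply: ysup; last exact: out0.
      exact: (psumr_eq0P (fun u _ => Hnn t u v) in0).
    rewrite Y0; have := Hcons t v tV vt; lra.
  - move=> u v huv; rewrite big_split /= -mulr_sumr (Rcap u v huv) mulr0 addr0.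
    exact: Hcap.
have Hpos : #|[set i | (0 < f2 i)%R]| = (\sum_(t in VT dst) #|posS (f2t t)|)%N.
  rewrite card_sumS sum_pair sum_pair [RHS]big_mkcond; apply: eq_bigr => t _.
  case: ifP => tV.
    rewrite card_sumS sum_pair; apply: eq_bigr => x _; apply: eq_bigr => z _.
    by rewrite !inE.
  apply: big1 => x _; apply: big1 => z _; rewrite inE Hz ?ltxx //; by rewrite tV.
have HJs : #|Js2| = (\sum_(t in VT dst) #|aliveS t (f2t t)| +
     #|[set e : V0 * V0 | E2 E0 Vpm e.1 e.2]|)%N.
  rewrite card_sumS big_sumType /=; congr (_ + _)%N.
    rewrite sum_pair [RHS]big_mkcond; apply: eq_bigr => t _.
    case: ifP => tV; last by apply: big1 => v _; rewrite inE tV.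
    by rewrite card_sumS; apply: eq_bigr => v _; rewrite inE /= tV.
  by rewrite card_sumS; apply: eq_bigr => uv _; rewrite !inE.
have Hsum : (\sum_(t in VT dst) (size (r2 t) + #|aliveS t (f2t t)|) <=
    \sum_(t in VT dst) (#|posS (f2t t)| + 1))%N.
  by apply: leq_sum => t tV; exact: Hrun t tV.
rewrite !big_split /= sum1_card in Hsum.
move: Hsum HLP; rewrite Hpos HJs.
move: (\sum_(t in VT dst) size (r2 t))%N (\sum_(t in VT dst) #|aliveS t (f2t t)|)%N
  (\sum_(t in VT dst) #|posS (f2t t)|)%N #|[set e : V0 * V0 | E2 E0 Vpm e.1 e.2]| #|VT dst|.
move=> n1 n2 n3 n4 n5 H1 H2; clear -H1 H2; lia.
Qed.

Lemma edge_count (V0 : finType) (E0 : rel V0) (Vpm : {set V0}) :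
  pm_structure E0 Vpm ->
  (#|[set e : V0 * V0 | E2 E0 Vpm e.1 e.2]| + #|Vpm| + #|Vswpm E0 Vpm| <= nb_edges E0)%N.
Proof.
move=> [H1 _].
pose B := [set e : V0 * V0 | E0 e.1 e.2 && (e.1 \in Vpm)].
pose Cc := [set e : V0 * V0 | E0 e.1 e.2 && (e.2 \in Vpm)].
have hB : (#|Vpm| <= #|B|)%N.
  apply: leq_trans (leq_imset_card fst B); apply: subset_leq_card.
  apply/subsetP => u uP; have [v [_ huv _ _]] := H1 u uP.
  by apply/imsetP; exists (u, v); rewrite // inE /= huv uP.
have hC : (#|Vswpm E0 Vpm| <= #|Cc|)%N.
  apply: leq_trans (leq_imset_card fst Cc); apply: subset_leq_card.
  apply/subsetP => v; rewrite inE => /andP[vnP /existsP[u /andP[uP huv]]].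
  have [v' [_ huv' hv'u hall]] := H1 u uP.
  have e : v = v' by apply: hall; rewrite huv.
  by apply/imsetP; exists (v, u); rewrite // inE /= e hv'u uP.
have excl : forall x y, E0 x y -> x \in Vpm -> y \notin Vpm.
  move=> x y hxy xP; have [v' [v'n _ _ hall]] := H1 x xP.
  by rewrite (hall y) ?hxy.
have hsum : (#|[set e : V0 * V0 | E2 E0 Vpm e.1 e.2]| + #|B| + #|Cc| <= nb_edges E0)%N.
  rewrite /nb_edges !card_sumS -!big_split /=; apply: leq_sum => -[x y] _; rewrite !inE /=.
  case: (boolP (E0 x y)) => h /=; last by rewrite /E2 (negbTE h).
  rewrite /E2 h /=.
  case: (boolP (x \in Vpm)) => xP /=.
    by rewrite (negbTE (excl _ _ h xP)).
  by case: (y \in Vpm).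
lia.
Qed.

Unset Implicit Arguments.

Theorem theorem1 (R : realFieldType) (V0 : finType) (E0 : rel V0)
  (Vpm : {set V0}) (g : V0 -> V0 -> R) (b : V0 -> R)
  (M C : nat) (src dst : 'I_M -> V0) (dem : 'I_M -> R)
  (cls : 'I_M -> 'I_C) (p : 'I_C -> R)
  (Hpm : pm_structure E0 Vpm)
  (Hg : forall u v, E0 u v -> 0 <= g u v)
  (Hb : forall u, u \in Vpm -> 0 <= b u)
  (Hsrc : forall i, src i \notin Vpm)
  (Hdst : forall i, dst i \notin Vpm)
  (Hdem : forall i, 0 < dem i)
  (Hcls : forall k, exists i, cls i = k)
  (Hp : forall k, 0 < p k)
  (f1 : X1 V0 C -> R)
  (Hf1 : optimal_bfs (lp1_feasible E0 Vpm g b src dem cls p) (@lp_obj R _) f1)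
  (r1 : 'I_C -> seq (tree_step R (V1 V0 C)))
  (Hr1 : forall k, flow2trees_run (@E1 V0 E0 Vpm C) (inr k) (d1 src dem cls k)
                     (fun x y => f1 (k, x, y)) (r1 k))
  (f2 : X2 V0 -> R)
  (Hf2 : optimal_bfs (lp2_feasible E0 Vpm g src dst dem cls f1 r1) (@lp_obj R _) f2)
  (r2 : V0 -> seq (tree_step R V0))
  (Hr2 : forall t, t \in VT dst ->
           flow2trees_run (E2 E0 Vpm) t
             (fun v => if v == t then 0 else d2 src dst dem cls r1 t v)
             (fun x y => f2 (t, x, y)) (r2 t)) :
  (\sum_(k < C) size (r1 k) + \sum_(t in VT dst) size (r2 t) + 2 * #|Vpm|
     <= C + 2 * nb_edges E0 + #|VT dst|)%N.
Proof.
have h1 := step1_count Hdem Hf1.1 Hr1.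
have h2 := step2_count Hdem Hr1 Hf2.1 Hr2.
have h3 := edge_count Hpm.
move: h1 h2 h3.
move: (\sum_(k < C) size (r1 k))%N (\sum_(t in VT dst) size (r2 t))%N
  #|[set e : V0 * V0 | E2 E0 Vpm e.1 e.2]| #|Vpm| #|Vswpm E0 Vpm| (nb_edges E0) #|VT dst|.
move=> n1 n2 n3 n4 n5 n6 n7 H1 H2 H3; clear -H1 H2 H3; lia.
Qed.
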